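(* If $\mathcal{X}=(X,\perp,R)$ is a monadic orthoframe, then $\mathcal{L}(\mathcal{X})=(\mathcal{L}(X,\perp),\exists_R)$ is a monadic ortholattice.
   Context: An orthoframe $(X,\perp)$ is a set with an irreflexive symmetric binary relation $\perp$; $A^\perp=\{x: a\perp x\ \forall a\in A\}$. $\mathcal{L}(X,\perp)=\{A\subseteq X: A=A^{\perp\perp}\}$ is a complete ortholattice with meets intersections, joins $(\bigcup A_i)^{\perp\perp}$, and orthocomplement $A\mapsto A^\perp$. $R[A]=\{y: x\,R\,y\text{ for some }x\in A\}$. A monadic orthoframe is $(X,\perp,R)$ with (M1) $\perp$ an orthogonality relation; (M2) $R$ reflexive and transitive; (M3) for each $x\in X$, $R[R[\{x\}]^\perp]\subseteq R[\{x\}]^\perp$. Define $\exists_RA=R[A]^{\perp\perp}$ for $A\in\mathcal{L}(X,\perp)$. A monadic ortholattice is an ortholattice with a unary $\exists$ satisfying (Q1) $\exists0=0$, (Q2) $p\le\exists p$, (Q3) $\exists(p\vee q)=\exists p\vee\exists q$, (Q4) $\exists\exists p=\exists p$, (Q5) $\exists(\exists p)^\perp=(\exists p)^\perp$. *)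

(* Defs.v *)
Set Implicit Arguments.

Section Defs.
Variable X : Type.

Definition set := X -> Prop.
Definition subset (A B : set) : Prop := forall x, A x -> B x.
Definition seteq (A B : set) : Prop := subset A B /\ subset B A.

Definition orthogonality (perp : X -> X -> Prop) : Prop :=
  (forall x, ~ perp x x) /\ (forall x y, perp x y -> perp y x).

Definition orth (perp : X -> X -> Prop) (A : set) : set :=
  fun x => forall a, A a -> perp a x.

(* A is in L(X, perp) iff A = A^{perp perp} *)
Definition closed (perp : X -> X -> Prop) (A : set) : Prop :=
  seteq A (orth perp (orth perp A)).

Definition emptyset : set := fun _ => False.
Definition fullset : set := fun _ => True.
Definition cap (A B : set) : set := fun x => A x /\ B x.
Definition join (perp : X -> X -> Prop) (A B : set) : set :=
  orth perp (orth perp (fun x => A x \/ B x)).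

Definition image (R : X -> X -> Prop) (A : set) : set :=
  fun y => exists x, A x /\ R x y.
Definition single (x : X) : set := fun y => y = x.

Definition monadic_orthoframe (perp R : X -> X -> Prop) : Prop :=
  orthogonality perp /\
  (forall x, R x x) /\
  (forall x y z, R x y -> R y z -> R x z) /\
  (forall x, subset (image R (orth perp (image R (single x))))
                    (orth perp (image R (single x)))).

Definition exR (perp R : X -> X -> Prop) (A : set) : set :=
  orth perp (orth perp (image R A)).

(* (L(X,perp), ex) is a monadic ortholattice: L is a (complete) ortholattice
   with the context's operations (meets = intersections, joins =
   closure of unions, complement = perp, 0 = empty, 1 = X), ex maps L into L,
   and (Q1)-(Q5) hold.  The lattice order is inclusion. *)
Definition is_ortholattice (perp : X -> X -> Prop) : Prop :=
  closed perp emptyset /\ closed perp fullset /\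
  (forall A B, closed perp A -> closed perp B -> closed perp (cap A B)) /\
  (forall A B, closed perp A -> closed perp B -> closed perp (join perp A B)) /\
  (forall A, closed perp A -> closed perp (orth perp A)) /\
  (forall A B C, closed perp C -> subset C A -> subset C B -> subset C (cap A B)) /\
  (forall A B, subset A (join perp A B) /\ subset B (join perp A B)) /\
  (forall A B C, closed perp C -> subset A C -> subset B C ->
     subset (join perp A B) C) /\
  (forall A, subset emptyset A /\ subset A fullset) /\
  (forall A, closed perp A -> seteq (orth perp (orth perp A)) A) /\
  (forall A B, closed perp A -> closed perp B -> subset A B ->
     subset (orth perp B) (orth perp A)) /\
  (forall A, closed perp A -> seteq (cap A (orth perp A)) emptyset) /\
  (forall A, closed perp A -> seteq (join perp A (orth perp A)) fullset).

Definition monadic_ortholattice (perp : X -> X -> Prop) (ex : set -> set) : Prop :=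
  is_ortholattice perp /\
  (forall A, closed perp A -> closed perp (ex A)) /\
  seteq (ex emptyset) emptyset /\
  (forall A, closed perp A -> subset A (ex A)) /\
  (forall A B, closed perp A -> closed perp B ->
              seteq (ex (join perp A B)) (join perp (ex A) (ex B))) /\
  (forall A, closed perp A -> seteq (ex (ex A)) (ex A)) /\
  (forall A, closed perp A ->
              seteq (ex (orth perp (ex A))) (orth perp (ex A))).
End Defs.

(* Main.v *)
Require Import Defs.

Section S.
Variable X : Type.
Variable p : X -> X -> Prop.
Hypothesis psym : forall x y, p x y -> p y x.
Hypothesis pirr : forall x, ~ p x x.

Lemma ext (A : set X) : subset A (orth p (orth p A)).
Proof. intros x Ax a Ha. apply psym, Ha, Ax. Qed.

Lemma anti (A B : set X) : subset A B -> subset (orth p B) (orth p A).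
Proof. intros H x Hx a Ha. apply Hx, H, Ha. Qed.

Lemma mono2 (A B : set X) : subset A B -> subset (orth p (orth p A)) (orth p (orth p B)).
Proof. intros H. apply anti, anti, H. Qed.

Lemma triple (A : set X) : seteq (orth p A) (orth p (orth p (orth p A))).
Proof. split. apply ext. apply anti, ext. Qed.

Lemma idem (A : set X) : subset (orth p (orth p (orth p (orth p A)))) (orth p (orth p A)).
Proof. apply anti, ext. Qed.

Lemma closed_orth (A : set X) : closed p (orth p A).
Proof. apply triple. Qed.

Lemma closed_sub (A B : set X) : closed p B -> subset A B ->
  subset (orth p (orth p A)) B.
Proof. intros [_ HB] H x Hx. apply HB. revert x Hx. apply mono2, H. Qed.
End S.

Theorem mainTheorem18 (X : Type) (perp R : X -> X -> Prop) :
  monadic_orthoframe perp R ->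
  monadic_ortholattice perp (exR perp R).
Proof.
  intros [[pirr psym] [Rref [Rtr M3]]].
  assert (M3' : forall x c d, (forall w, R x w -> perp w c) -> R c d ->
                 forall w, R x w -> perp w d).
  { intros x c d Hc Hcd. intros w Hw. refine (M3 x d _ w _); [|exists x; split; [reflexivity|exact Hw]]. exists c. split; [|exact Hcd].
    intros w0 [x0 [Hx0 Hxw]]. unfold single in Hx0. subst. apply Hc, Hxw. }
  assert (L : forall S : set X, subset (image R (orth perp (orth perp S)))
                     (orth perp (orth perp (image R S)))).
  { intros S b [a [Ha Hab]] c Hc.
    assert (Hs : forall s, S s -> forall t, R s t -> perp t c).
    { intros s Hs t Hst. apply Hc. exists s. split; assumption. }
    assert (Ha' : forall d, R c d -> perp d a).
    { intros d Hcd. apply Ha. intros s Hs0.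
      apply (M3' s c d (Hs s Hs0) Hcd s (Rref s)). }
    apply (M3' c a b) with (w := c); auto.
 }
  assert (ImM : forall A B : set X, subset A B -> subset (image R A) (image R B)).
  { intros A B H y [x [Hx Hxy]]. exists x. split; auto. }
  assert (Q2 : forall A : set X, subset A (exR perp R A)).
  { intros A x Hx. apply ext; auto. exists x. split; auto. }
  assert (Cex : forall A, closed perp (exR perp R A)).
  { intros A. apply closed_orth; auto. }
  assert (Hjoin1 : forall A B : set X, subset A (join perp A B) /\ subset B (join perp A B)).
  { intros A B; split; intros x Hx; apply ext; auto. }
  assert (Hjl : forall A B C : set X, closed perp C -> subset A C -> subset B C ->
     subset (join perp A B) C).
  { intros A B C HC HA HB. apply closed_sub; auto. intros x [H|H]; auto. }
  split.
  {
    split.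
    { split. intros x []. intros x Hx. apply (pirr x). apply Hx. intros a Ha. destruct Ha. }
    split.
    { split. intros x _ a Ha. destruct (pirr a (Ha a I)). intros x _; exact I. }
    split.
    { intros A B [HA1 HA2] [HB1 HB2]. split. apply ext; auto.
      intros x Hx. split.
      - apply HA2. revert x Hx. apply mono2. intros y [? ?]; auto.
      - apply HB2. revert x Hx. apply mono2. intros y [? ?]; auto. }
    split. { intros A B _ _. apply closed_orth; auto. }
    split. { intros A _. apply closed_orth; auto. }
    split. { intros A B C _ H1 H2 x Hx. split; auto. }
    split. { exact Hjoin1. }
    split. { exact Hjl. }
    split. { intros A; split; intros x Hx; [destruct Hx | exact I]. }
    split. { intros A [H1 H2]. split; assumption. }
    split. { intros A B _ _ H. apply anti, H. }
    split. { intros A _. split. intros x [H1 H2]. apply (pirr x), (H2 x H1).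
             intros x []. }
    intros A _. split. intros x _; exact I.
    intros x _ c Hc. exfalso. apply (pirr c).
    apply Hc. right. intros a Ha. apply Hc. left. exact Ha. }
  split. { intros A _. apply Cex. }
  split.
  { split.
    - intros x Hx. apply (pirr x). apply Hx. intros a [b [[] _]].
    - intros x []. }
  split. { intros A _. apply Q2. }
  split.
  { intros A B _ _. split.
    - intros x Hx. apply idem; auto. revert x Hx. apply mono2.
      intros y Hy. apply L in Hy. revert y Hy. apply mono2.
      intros y [z [[Hz|Hz] Hzy]].
      + left. apply ext; auto. exists z; auto.
      + right. apply ext; auto. exists z; auto.
    - apply Hjl. apply Cex.
      + apply mono2, ImM, Hjoin1.
      + apply mono2, ImM, Hjoin1. }
  split.
  { intros A _. split.
    - intros x Hx. apply idem; auto. revert x Hx. apply mono2.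
      intros y Hy. apply L in Hy. revert y Hy. apply mono2.
      intros y [z [[w [Hw Hwz]] Hzy]]. exists w. split; eauto.
    - apply Q2. }
  intros A _. split.
  - unfold exR at 1. apply closed_sub; auto. apply closed_orth; auto.
    intros d [c [Hc Hcd]].
    apply (proj1 (@triple X perp psym (image R A))).
    apply (proj2 (@triple X perp psym (image R A))) in Hc.
    intros t [a [Ha Hat]].
    apply (M3' a c d) with (w := t); auto.
    intros w Hw. apply Hc. exists a. split; auto.
  - apply Q2.
Qed.
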